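(* Let $R$ be an associative unital division ring over a field of characteristic $0$, and let $\varphi_k\in R$ for $k\in\mathbb{Z}$. For $m\in\mathbb{Z}$ and $n\geq1$ put $$\Theta_{m,n}=\bigl(\varphi_{m+i+j-1}\bigr)_{1\leq i,j\leq n},\qquad \theta_{m,n}=|\Theta_{m,n}|_{nn},$$ with the convention $\theta_{m,0}^{-1}:=0$, and assume all quasideterminants involved are defined and all $\theta_{m,n}$ ($n\ge1$) invertible. Then for all $m\in\mathbb{Z}$, $n\geq1$, $$\theta_{m+2,n}=\theta_{m,n+1}+\theta_{m+1,n}\bigl(\theta_{m,n}^{-1}-\theta_{m+2,n-1}^{-1}\bigr)\theta_{m+1,n}.$$
   Context: For an $n\times n$ matrix $X$ over $R$, $|X|_{ij}=x_{ij}-r_i^j(X^{ij})^{-1}c_j^i$, where $X^{ij}$ is $X$ with row $i$ and column $j$ removed, $r_i^j$ is row $i$ without its $j$-th entry and $c_j^i$ is column $j$ without its $i$-th entry; for $n=1$, $|X|_{11}=x_{11}$. *)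

(* Defs.v *)
From HB Require Import structures.
From mathcomp Require Import all_boot all_order all_algebra.
From Stdlib Require Import ClassicalEpsilon.
Set Implicit Arguments. Unset Strict Implicit. Unset Printing Implicit Defensive.
Import Order.TTheory GRing.Theory Num.Theory.
Local Open Scope ring_scope.

Section QuasiDet.
Variable R : unitRingType.

Definition mx_is_inv (k : nat) (A B : 'M[R]_k) : Prop :=
  A *m B = 1%:M /\ B *m A = 1%:M.

Definition mx_invertible (k : nat) (A : 'M[R]_k) : Prop :=
  exists B, mx_is_inv A B.

(* The (unique, when it exists) two-sided inverse; junk value otherwise. *)
Definition mx_inv (k : nat) (A : 'M[R]_k) : 'M[R]_k :=
  epsilon (inhabits 0) (fun B => mx_is_inv A B).

Definition qminor (n : nat) (X : 'M[R]_n.+1) (i j : 'I_n.+1) : 'M[R]_n :=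
  row' i (col' j X).

(* |X|_{ij} = x_ij - r_i^j (X^{ij})^{-1} c_j^i.  For n.+1 = 1 the correction
   term is an empty product, i.e. |X|_{11} = x_11. *)
Definition qdet (n : nat) (X : 'M[R]_n.+1) (i j : 'I_n.+1) : R :=
  X i j - (row i (col' j X) *m mx_inv (qminor X i j) *m col j (row' i X)) 0 0.

Definition qdet_defined (n : nat) (X : 'M[R]_n.+1) (i j : 'I_n.+1) : Prop :=
  mx_invertible (qminor X i j).

(* Theta_{m,n} = (phi_{m+i+j-1})_{1<=i,j<=n}; with 0-based indices i, j
   the entry is phi_{m+i+j+1}. *)
Definition Theta (phi : int -> R) (m : int) (n : nat) : 'M[R]_n :=
  \matrix_(i < n, j < n) phi (m + (i + j + 1)%:Z).

(* theta_{m,n} = |Theta_{m,n}|_{nn} for n >= 1 (value 0 for n = 0, unused). *)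
Definition theta (phi : int -> R) (m : int) (n : nat) : R :=
  match n with
  | 0 => 0
  | n'.+1 => qdet (Theta phi m n'.+1) ord_max ord_max
  end.

Definition theta_inv (phi : int -> R) (m : int) (n : nat) : R :=
  match n with
  | 0 => 0
  | _.+1 => (theta phi m n)^-1
  end.

End QuasiDet.

(* Main.v *)
Require Import Defs.
From HB Require Import structures.
From mathcomp Require Import all_boot all_order all_algebra.
From mathcomp Require zify.
From Stdlib Require Import ClassicalEpsilon.
Import GRing.Theory.
Local Open Scope ring_scope.

Module Aux.
Import zify.

Set Implicit Arguments.
Section Gen.
Variable R : unitRingType.

Lemma mx_inv_spec k (A : 'M[R]_k) : mx_invertible A -> mx_is_inv A (mx_inv A).
Proof. by move=> [B HB]; apply: (epsilon_spec (inhabits 0) _ (ex_intro _ B HB)). Qed.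

Lemma lift_maxW k (i : 'I_k) : lift ord_max i = widen_ord (leqnSn k) i.
Proof. by apply: val_inj; rewrite /= /bump leqNgt ltn_ord. Qed.

Definition ecol k (s : R) : 'cV[R]_k.+1 := \col_i (if i == ord_max then s else 0).
Definition erow k (s : R) : 'rV[R]_k.+1 := \row_i (if i == ord_max then s else 0).

Lemma solve_last k (X : 'M[R]_k.+1) (y : 'cV_k.+1) (s : R) :
  mx_invertible (qminor X ord_max ord_max) ->
  X *m y = ecol k s ->
  qdet X ord_max ord_max * y ord_max 0 = s.
Proof.
move=> /mx_inv_spec [_ HB] HXy.
set l : 'I_k.+1 := ord_max.
set B := mx_inv _ in HB *.
set X' := qminor X l l in HB *.
set c := col l (row' l X); set r := row l (col' l X); set y' := row' l y.
have E1 : X' *m y' + c *m (y l 0)%:M = 0.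
  apply/matrixP => i j; rewrite [j]ord1.
  have := congr1 (fun M : 'M_(k.+1,1) => M (lift l i) 0) HXy.
  have Hn : (lift l i == l) = false by rewrite eq_sym (negbTE (neq_lift _ _)).
  rewrite !mxE big_ord_recr /= Hn => H; apply: eq_trans H.
  rewrite big_ord1 !mxE eqxx mulr1n; congr (_ + _).
  by apply: eq_bigr => j0 _; rewrite !mxE /l !lift_maxW.
have E2 : s = (r *m y') 0 0 + X l l * y l 0.
  have := congr1 (fun M : 'M_(k.+1,1) => M l 0) HXy.
  rewrite !mxE big_ord_recr /= eqxx => <-.
  by congr (_ + _); apply: eq_bigr => j0 _; rewrite !mxE /l !lift_maxW.
have Ey : y' = - (B *m c *m (y l 0)%:M).
  rewrite -[y']mul1mx -HB -[LHS]mulmxA.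
  have -> : X' *m y' = - (c *m (y l 0)%:M) by apply/eqP; rewrite -subr_eq0 opprK E1.
  by rewrite mulmxN !mulmxA.
have H1 : (r *m (B *m c *m (y l 0)%:M)) 0 0 = (r *m B *m c) 0 0 * y l 0.
  by rewrite !mulmxA [LHS]mxE big_ord1 [_%:M _ _]mxE eqxx mulr1n.
rewrite /qdet -/l -/X' -/B -/c -/r E2 Ey mulmxN [(- _ : 'M_1) _ _]mxE H1.
by rewrite mulrBl addrC.
Qed.

Lemma solve_last_row k (X : 'M[R]_k.+1) (z : 'rV_k.+1) (s : R) :
  mx_invertible (qminor X ord_max ord_max) ->
  z *m X = erow k s ->
  z 0 ord_max * qdet X ord_max ord_max = s.
Proof.
move=> /mx_inv_spec [HB _] HXy.
set l : 'I_k.+1 := ord_max.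
set B := mx_inv _ in HB *.
set X' := qminor X l l in HB *.
set c := col l (row' l X); set r := row l (col' l X); set z' := col' l z.
have E1 : z' *m X' + (z 0 l)%:M *m r = 0.
  apply/matrixP => i j; rewrite [i]ord1.
  have Hn : (lift l j == l) = false by rewrite eq_sym (negbTE (neq_lift _ _)).
  have := congr1 (fun M : 'M_(1,k.+1) => M 0 (lift l j)) HXy.
  rewrite !mxE big_ord_recr /= Hn => H; apply: eq_trans H.
  rewrite big_ord1 !mxE eqxx mulr1n.
  by congr (_ + _); apply: eq_bigr => j0 _; rewrite !mxE /l !lift_maxW.
have E2 : s = (z' *m c) 0 0 + z 0 l * X l l.
  have := congr1 (fun M : 'M_(1,k.+1) => M 0 l) HXy.
  rewrite !mxE big_ord_recr /= eqxx => <-.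
  by congr (_ + _); apply: eq_bigr => j0 _; rewrite !mxE /l !lift_maxW.
have Ey : z' = - ((z 0 l)%:M *m r *m B).
  rewrite -[z']mulmx1 -HB [LHS]mulmxA.
  have -> : z' *m X' = - ((z 0 l)%:M *m r) by apply/eqP; rewrite -subr_eq0 opprK E1.
  by rewrite mulNmx.
have H1 : ((z 0 l)%:M *m r *m B *m c) 0 0 = z 0 l * (r *m B *m c) 0 0.
  by rewrite -!mulmxA [LHS]mxE big_ord1 [_%:M _ _]mxE eqxx mulr1n !mulmxA.
rewrite /qdet -/l -/X' -/B -/c -/r E2 Ey mulNmx [(- _ : 'M_1) _ _]mxE H1.
by rewrite mulrBr addrC.
Qed.

Lemma block_solve k (a : 'M[R]_1) (u : 'M_(1,k)) (v : 'M_(k,1)) (D Di : 'M_k)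
    (si : 'M_1) (q0 : 'M_1) (q' : 'M_(k,1)) :
  D *m Di = 1%:M -> (a - u *m Di *m v) *m si = 1%:M ->
  block_mx a u v D *m
    col_mx (si *m (q0 - u *m Di *m q'))
           (Di *m q' - Di *m v *m si *m (q0 - u *m Di *m q'))
  = col_mx q0 q'.
Proof.
move=> HD Hs; set g := q0 - _.
have Hg : q0 = g + u *m Di *m q' by rewrite /g subrK.
clearbody g.
rewrite mul_block_col; congr col_mx.
  rewrite mulmxBr !mulmxA addrA addrAC -mulmxBl -mulmxBl Hs mul1mx.
  by rewrite Hg.
by rewrite mulmxBr !mulmxA HD !mul1mx addrC subrK.
Qed.

Lemma row_solve k (si p0 : 'M[R]_1) (p' : 'M_(1,k)) (v : 'M_(k,1)) (Di : 'M_k)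
   (q' : 'M_(k,1)) (g : 'M_1) :
  row_mx p0 p' *m col_mx (si *m g) (Di *m q' - Di *m v *m si *m g)
  = p' *m Di *m q' + (p0 - p' *m Di *m v) *m si *m g.
Proof.
by rewrite mul_row_col mulmxBr !mulmxA !mulmxBl addrCA.
Qed.

Lemma schur_nz k (a : 'M[R]_1) (u : 'M_(1,k)) (v : 'M_(k,1)) (D Di : 'M_k)
    (Ai : 'M_(1+k)) :
  D *m Di = 1%:M -> Ai *m block_mx a u v D = 1%:M ->
  (a - u *m Di *m v) 0 0 != 0.
Proof.
move=> HD HA; apply/negP => /eqP H0.
set z := col_mx (1%:M : 'M[R]_1) (- (Di *m v)).
have Az : block_mx a u v D *m z = 0.
  rewrite mul_block_col !mulmx1 !mulmxN !mulmxA HD mul1mx subrr.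
  rewrite [a - _]mx11_scalar H0.
  by apply/matrixP => i j; rewrite !mxE; case: splitP => ? ?; rewrite !mxE ?mul0rn.
have : z = 0 by rewrite -[z]mul1mx -HA -mulmxA Az mulmx0.
move/(congr1 (fun M : 'M_(1+k,1) => M (lshift k 0) 0)).
rewrite col_mxEu !mxE eqxx mulr1n => /eqP; by rewrite oner_eq0.
Qed.
End Gen.
Arguments ecol {R} k s. Arguments erow {R} k s.

Ltac hk := rewrite !mxE /=; congr (_ _); rewrite /bump;
  repeat match goal with i : 'I_ _ |- _ => case: i => [? ?] /= end; lia.

Section Hank.
Variable R : unitRingType.
Variable phi : int -> R.

Lemma qminor_Theta m n : qminor (Theta phi m n.+1) ord_max ord_max = Theta phi m n.
Proof. apply/matrixP => i j; rewrite !mxE !lift_maxW //. Qed.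

Lemma drsub_Theta m k : drsubmx (Theta phi m k.+1 : 'M_(1+k)) = Theta phi (m+2) k.
Proof. by apply/matrixP => i j; hk. Qed.

Lemma rsub_r m k : rsubmx (row ord_max (col' ord_max (Theta phi m k.+2)) : 'rV_(1+k))
  = row ord_max (col' ord_max (Theta phi (m+2) k.+1)).
Proof. by apply/matrixP => i j; hk. Qed.

Lemma dsub_c m k : dsubmx (col ord_max (row' ord_max (Theta phi m k.+2)) : 'cV_(1+k))
  = col ord_max (row' ord_max (Theta phi (m+2) k.+1)).
Proof. by apply/matrixP => i j; hk. Qed.

Lemma corner_Theta m k : Theta phi m k.+2 ord_max ord_max = Theta phi (m+2) k.+1 ord_max ord_max.
Proof. hk. Qed.

Lemma G_e m k i : lsubmx (Theta phi (m+1) k.+1 : 'M_(k.+1, 1+k)) (lift ord_max i) 0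
  = dlsubmx (Theta phi m k.+1 : 'M_(1+k)) i 0.
Proof. hk. Qed.

Lemma G_f m k i j : rsubmx (Theta phi (m+1) k.+1 : 'M_(k.+1, 1+k)) (lift ord_max i) j
  = Theta phi (m+2) k i j.
Proof. hk. Qed.

Lemma G_g m k : lsubmx (Theta phi (m+1) k.+1 : 'M_(k.+1, 1+k)) ord_max 0
  = lsubmx (row ord_max (col' ord_max (Theta phi m k.+2)) : 'rV_(1+k)) 0 0.
Proof. hk. Qed.

Lemma G_h m k j : rsubmx (Theta phi (m+1) k.+1 : 'M_(k.+1, 1+k)) ord_max j
  = rsubmx (row ord_max (col' ord_max (Theta phi m k.+2)) : 'rV_(1+k)) 0 j.
Proof. hk. Qed.

Lemma G_e' m k j : usubmx (Theta phi (m+1) k.+1 : 'M_(1+k, k.+1)) 0 (lift ord_max j)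
  = ursubmx (Theta phi m k.+1 : 'M_(1+k)) 0 j.
Proof. hk. Qed.

Lemma G_f' m k i j : dsubmx (Theta phi (m+1) k.+1 : 'M_(1+k, k.+1)) i (lift ord_max j)
  = Theta phi (m+2) k i j.
Proof. hk. Qed.

Lemma G_g' m k : usubmx (Theta phi (m+1) k.+1 : 'M_(1+k, k.+1)) 0 ord_max
  = usubmx (col ord_max (row' ord_max (Theta phi m k.+2)) : 'cV_(1+k)) 0 0.
Proof. hk. Qed.

Lemma G_h' m k i : dsubmx (Theta phi (m+1) k.+1 : 'M_(1+k, k.+1)) i ord_max
  = dsubmx (col ord_max (row' ord_max (Theta phi m k.+2)) : 'cV_(1+k)) i 0.
Proof. hk. Qed.

Lemma a_Theta m k : ulsubmx (Theta phi m k.+1 : 'M_(1+k)) 0 0 = Theta phi m 1 0 0.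
Proof. hk. Qed.
End Hank.

Set Implicit Arguments.
Section Gen2.
Variable R : unitRingType.

Lemma mul0dim p q (x : 'M[R]_(p,0)) (y : 'M[R]_(0,q)) : x *m y = 0.
Proof. by apply/matrixP => i j; rewrite !mxE big_ord0. Qed.

Lemma qdet1 (X : 'M[R]_1) : qdet X ord_max ord_max = X 0 0.
Proof. rewrite /qdet (@mul0dim 1 1) !mxE subr0; congr (X _ _); exact: val_inj. Qed.

Lemma mulmx_col11 n (x : 'M[R]_(n,1)) (y : 'M[R]_1) i : (x *m y) i 0 = x i 0 * y 0 0.
Proof. by rewrite mxE big_ord1. Qed.

Lemma mulmx_ecol p k (x : 'M[R]_(p,k.+1)) s i : (x *m ecol k s) i 0 = x i ord_max * s.
Proof.
rewrite mxE big_ord_recr /= big1 ?add0r => [|j _]; rewrite mxE ?eqxx //.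
by rewrite (_ : (widen_ord _ j == ord_max) = false) ?mulr0 // -val_eqE /= ltn_eqF.
Qed.

Lemma col_mx_ecol k s : col_mx (0 : 'M[R]_1) (ecol k s) = ecol k.+1 s.
Proof.
apply/matrixP => i j; rewrite !mxE; case: splitP => i0 Hi; rewrite !mxE //.
  by rewrite (_ : (i == ord_max) = false) // -val_eqE /= Hi (ord1 i0).
by rewrite (_ : (i == ord_max) = (i0 == ord_max)) // -!val_eqE /= Hi.
Qed.

Lemma col_mx_erow k s : row_mx (0 : 'M[R]_1) (erow k s) = erow k.+1 s.
Proof.
apply/matrixP => i j; rewrite !mxE; case: splitP => j0 Hj; rewrite !mxE //.
  by rewrite (_ : (j == ord_max) = false) // -val_eqE /= Hj (ord1 j0).
by rewrite (_ : (j == ord_max) = (j0 == ord_max)) // -!val_eqE /= Hj.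
Qed.

Lemma ord_max_rshift k : (ord_max : 'I_(1 + k.+1)) = rshift 1 (ord_max : 'I_k.+1).
Proof. by apply: val_inj. Qed.
End Gen2.

Set Implicit Arguments.
Section Main.
Variable R : unitRingType.
Variable phi : int -> R.
Variable Hmin : forall m n, mx_invertible (qminor (Theta phi m n.+1) ord_max ord_max).

Lemma Hinvm m n : mx_invertible (Theta phi m n).
Proof. by rewrite -qminor_Theta. Qed.

Lemma subE p q (A B : 'M[R]_(p,q)) i j : (A - B) i j = A i j - B i j.
Proof. by rewrite !mxE. Qed.

Lemma zeroE p q i j : (0 : 'M[R]_(p,q)) i j = 0.
Proof. by rewrite mxE. Qed.

Definition Di m k := mx_inv (Theta phi (m+2) k).
Definition am m k : 'M_1 := ulsubmx (Theta phi m k.+1 : 'M_(1+k)).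
Definition um m k : 'M_(1,k) := ursubmx (Theta phi m k.+1 : 'M_(1+k)).
Definition vm m k : 'M_(k,1) := dlsubmx (Theta phi m k.+1 : 'M_(1+k)).
Definition sig m k := am m k - um m k *m Di m k *m vm m k.
Definition rr m k : 'rV_(1+k) := row ord_max (col' ord_max (Theta phi m k.+2)).
Definition cc m k : 'cV_(1+k) := col ord_max (row' ord_max (Theta phi m k.+2)).
Definition r2 m k := row ord_max (col' ord_max (Theta phi (m+2) k.+1)).
Definition c2 m k := col ord_max (row' ord_max (Theta phi (m+2) k.+1)).
Definition rho m k := lsubmx (rr m k) - r2 m k *m Di m k *m vm m k.
Definition gg m k := usubmx (cc m k) - um m k *m Di m k *m c2 m k.

Lemma HD m k : Theta phi (m+2) k *m Di m k = 1%:M /\ Di m k *m Theta phi (m+2) k = 1%:M.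
Proof. exact: (mx_inv_spec (Hinvm _ _)). Qed.

Lemma Ablk m k : (Theta phi m k.+1 : 'M_(1+k))
   = block_mx (am m k) (um m k) (vm m k) (Theta phi (m+2) k).
Proof. by rewrite -drsub_Theta submxK. Qed.

Lemma sig_nz m k : sig m k 0 0 != 0.
Proof.
have [HA HA'] := mx_inv_spec (Hinvm m k.+1).
apply: (schur_nz (HD m k).1 (Ai := mx_inv (Theta phi m k.+1))).
by rewrite -Ablk.
Qed.

Lemma Hsi m k : sig m k 0 0 \is a GRing.unit ->
  sig m k *m (sig m k 0 0)^-1%:M = 1%:M.
Proof. by move=> Hu; rewrite {1}[sig m k]mx11_scalar -scalar_mxM divrr. Qed.

Lemma sylv m k : sig m k 0 0 \is a GRing.unit ->
  theta phi m k.+2 = theta phi (m+2) k.+1 - rho m k 0 0 * (sig m k 0 0)^-1 * gg m k 0 0.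
Proof.
move=> Hu; pose si : 'M[R]_1 := (sig m k 0 0)^-1%:M.
have Ey : mx_inv (Theta phi m k.+1) *m cc m k
    = col_mx (si *m gg m k) (Di m k *m c2 m k - Di m k *m vm m k *m si *m gg m k).
  have [_ HA'] := mx_inv_spec (Hinvm m k.+1).
  rewrite -[cc m k]vsubmxK dsub_c.
  rewrite -(block_solve (usubmx (cc m k)) (c2 m k) (HD m k).1 (@Hsi m k Hu)).
  by rewrite -Ablk mulmxA HA' mul1mx.
have E1 : theta phi m k.+2 = Theta phi m k.+2 ord_max ord_max
    - (rr m k *m mx_inv (Theta phi m k.+1) *m cc m k) 0 0.
  by rewrite /theta /qdet qminor_Theta.
have E2 : theta phi (m+2) k.+1 = Theta phi (m+2) k.+1 ord_max ord_max
    - (r2 m k *m Di m k *m c2 m k) 0 0.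
  by rewrite /theta /qdet qminor_Theta.
rewrite E1 E2 -mulmxA Ey -[rr m k]hsubmxK rsub_r row_solve [(_ + _ : 'M_1) _ _]mxE corner_Theta.
rewrite opprD addrA !mulmx_col11 [_%:M _ _]mxE eqxx mulr1n.
by [].
Qed.

Lemma case0 m : theta phi (m+1) 1 = rho m 0 0 0 /\ theta phi (m+1) 1 = gg m 0 0 0
   /\ theta phi m 1 = sig m 0 0 0.
Proof.
rewrite /theta !qdet1 /rho /gg /sig !(@mul0dim _ 1 1) !subr0.
by split; [|split]; hk.
Qed.

Lemma L4 m k : theta phi (m+1) k.+1 *
   (col_mx (1%:M : 'M_1) (- (Di m k *m vm m k)) : 'cV_(1+k)) ord_max 0 = rho m k 0 0.
Proof.
rewrite /theta; apply: solve_last; first exact: Hmin.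
set G := Theta phi (m+1) k.+1.
have -> : G = row_mx (lsubmx (G : 'M_(k.+1, 1+k))) (rsubmx (G : 'M_(k.+1, 1+k))).
  by rewrite hsubmxK.
rewrite (@mul_row_col _ k.+1 1 k 1) mulmx1 mulmxN.
apply/matrixP => i j; rewrite [j]ord1.
case: (unliftP ord_max i) => [i'|] ->.
  have Hn : (lift ord_max i' == ord_max) = false.
    by rewrite eq_sym (negbTE (neq_lift _ _)).
  rewrite [ecol _ _ _ _]mxE Hn.
  have Er : (rsubmx (G : 'M_(k.+1, 1+k)) *m (Di m k *m vm m k)) (lift ord_max i') 0
      = (Theta phi (m+2) k *m (Di m k *m vm m k)) i' 0.
    by rewrite [LHS]mxE [RHS]mxE; apply: eq_bigr => j0 _; rewrite G_f.
  by rewrite subE G_e Er mulmxA (HD m k).1 mul1mx subrr.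
rewrite [ecol _ _ _ _]mxE eqxx.
have Er : (rsubmx (G : 'M_(k.+1, 1+k)) *m (Di m k *m vm m k)) ord_max 0
      = (r2 m k *m (Di m k *m vm m k)) 0 0.
  rewrite [LHS]mxE [RHS]mxE; apply: eq_bigr => j0 _; rewrite G_h rsub_r //.
by rewrite subE G_g Er /rho subE mulmxA.
Qed.

Lemma L4b m k : (row_mx (1%:M : 'M_1) (- (um m k *m Di m k)) : 'rV_(1+k)) 0 ord_max
   * theta phi (m+1) k.+1 = gg m k 0 0.
Proof.
rewrite /theta; apply: solve_last_row; first exact: Hmin.
set G := Theta phi (m+1) k.+1.
have -> : G = col_mx (usubmx (G : 'M_(1+k, k.+1))) (dsubmx (G : 'M_(1+k, k.+1))).
  by rewrite vsubmxK.
rewrite (@mul_row_col _ 1 1 k k.+1) mul1mx mulNmx.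
apply/matrixP => i j; rewrite [i]ord1.
case: (unliftP ord_max j) => [j'|] ->.
  have Hn : (lift ord_max j' == ord_max) = false.
    by rewrite eq_sym (negbTE (neq_lift _ _)).
  rewrite [erow _ _ _ _]mxE Hn.
  have Er : (um m k *m Di m k *m dsubmx (G : 'M_(1+k, k.+1))) 0 (lift ord_max j')
      = (um m k *m Di m k *m Theta phi (m+2) k) 0 j'.
    by rewrite [LHS]mxE [RHS]mxE; apply: eq_bigr => i0 _; rewrite G_f'.
  by rewrite subE G_e' Er -mulmxA (HD m k).2 mulmx1 subrr.
rewrite [erow _ _ _ _]mxE eqxx.
have Er : (um m k *m Di m k *m dsubmx (G : 'M_(1+k, k.+1))) 0 ord_max
      = (um m k *m Di m k *m c2 m k) 0 0.
  rewrite [LHS]mxE [RHS]mxE; apply: eq_bigr => i0 _; rewrite G_h' dsub_c //.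
by rewrite subE G_g' Er /gg subE.
Qed.

Lemma LD m k' : theta phi (m+2) k'.+1 * (Di m k'.+1 *m ecol k' 1) ord_max 0 = 1.
Proof.
rewrite /theta; apply: solve_last; first exact: Hmin.
by rewrite mulmxA (HD m k'.+1).1 mul1mx.
Qed.

Lemma L2 m k' : sig m k'.+1 0 0 \is a GRing.unit ->
  theta phi m k'.+2 * ((Di m k'.+1 *m ecol k' 1) ord_max 0
     + (Di m k'.+1 *m vm m k'.+1) ord_max 0 * (sig m k'.+1 0 0)^-1
       * (um m k'.+1 *m Di m k'.+1) 0 ord_max) = 1.
Proof.
move=> Hu.
pose si : 'M[R]_1 := (sig m k'.+1 0 0)^-1%:M.
have := @solve_last _ _ (Theta phi m k'.+2)
  (col_mx (si *m (0 - um m k'.+1 *m Di m k'.+1 *m ecol k' 1))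
     (Di m k'.+1 *m ecol k' 1 - Di m k'.+1 *m vm m k'.+1 *m si
        *m (0 - um m k'.+1 *m Di m k'.+1 *m ecol k' 1))) 1 (Hmin _ _).
rewrite -/(theta phi m k'.+2).
have HA : Theta phi m k'.+2 *m (col_mx (si *m (0 - um m k'.+1 *m Di m k'.+1 *m ecol k' 1))
     (Di m k'.+1 *m ecol k' 1 - Di m k'.+1 *m vm m k'.+1 *m si
        *m (0 - um m k'.+1 *m Di m k'.+1 *m ecol k' 1))) = ecol k'.+1 1.
  by rewrite (Ablk m k'.+1) (block_solve 0 (ecol k' 1) (HD m k'.+1).1 (@Hsi m k'.+1 Hu))
             col_mx_ecol.
move=> /(_ HA) H; rewrite -[RHS]H; congr (_ * _).
rewrite (ord_max_rshift k') (@col_mxEd _ 1 k'.+1 1) [RHS]subE !mulmx_col11 [_%:M _ _]mxE eqxx mulr1n.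
rewrite !subE zeroE sub0r !mulmx_ecol !mulr1 mulrN opprK.
by [].
Qed.
End Main.

End Aux.
Import Aux.

Theorem proposition4p5 (F : fieldType) (R : unitAlgType F)
    (charF0 : [pchar F] =i pred0)
    (divR : forall x : R, x != 0 -> x \is a GRing.unit)
    (phi : int -> R)
    (Hdef : forall (m : int) (n : nat),
        qdet_defined (Theta phi m n.+1) ord_max ord_max)
    (Hinv : forall (m : int) (n : nat), (0 < n)%N ->
        theta phi m n \is a GRing.unit)
    (m : int) (n : nat) :
  (0 < n)%N ->
  theta phi (m + 2) n =
    theta phi m n.+1
    + theta phi (m + 1) n * (theta_inv phi m n - theta_inv phi (m + 2) n.-1)
      * theta phi (m + 1) n.
Proof.
case: n => // k _.
have Hmin : forall m n, mx_invertible (qminor (Theta phi m n.+1) ord_max ord_max) := Hdef.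
have Hu : forall m k, sig R phi m k 0 0 \is a GRing.unit :=
  fun m k => divR _ (sig_nz Hmin m k).
rewrite (sylv Hmin m k (Hu m k)).
case: k => [|k'].
  have [e1 [e2 e3]] := case0 R phi m.
  have -> : theta_inv phi (m + 2) (0.+1).-1 = 0 by [].
  have -> : theta_inv phi m 1 = (theta phi m 1)^-1 by [].
  by rewrite -e1 -e2 e3 subr0 subrK.
have -> : theta_inv phi (m+2) (k'.+2).-1 = (theta phi (m+2) k'.+1)^-1 by [].
have -> : theta_inv phi m k'.+2 = (theta phi m k'.+2)^-1 by [].
have h2 := L2 Hmin m k' (Hu m k'.+1).
have hD := LD Hmin m k'.
set E := (Di R phi m k'.+1 *m ecol k' 1) ord_max 0 in h2 hD.
have eA := mulKr (Hinv m k'.+2 isT).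
have eD := mulKr (Hinv (m+2) k'.+1 isT).
have h4 := L4 Hmin m k'.+1.
rewrite (ord_max_rshift k') (@col_mxEd _ 1 k'.+1 1) mxE in h4.
have h4b := L4b Hmin m k'.+1.
rewrite (ord_max_rshift k') (@row_mxEr _ 1 1 k'.+1) mxE in h4b.
rewrite -[(theta phi m k'.+2)^-1]mulr1 -h2 eA.
rewrite -[(theta phi (m+2) k'.+1)^-1]mulr1 -hD eD.
rewrite -h4 -h4b.
set W := (Di R phi m k'.+1 *m vm R phi m k'.+1) ord_max 0.
set W' := (um R phi m k'.+1 *m Di R phi m k'.+1) 0 ord_max.
rewrite [E + _ - E]addrAC subrr add0r.
by rewrite !mulrN !mulNr !opprK !mulrA mulrN !mulrA subrK.
Qed.
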